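(* Let $R$ be a ring with identity, ${}_RM$ a finitely generated semisimple left $R$-module and $\varphi:M\to M$ a nilpotent $R$-endomorphism. Then the centralizer $C_\varphi=\{\psi\in\mathrm{Hom}_R(M,M)\mid\psi\circ\varphi=\varphi\circ\psi\}$, as a $Z(R)$-subalgebra of $\mathrm{Hom}_R(M,M)$, is a homomorphic image (as $Z(R)$-algebras) of the opposite algebra of some $Z(R)$-subalgebra of the matrix algebra $M_{m\times m}(R[t])$, where $m=\dim_R(\ker(\varphi))$.
   Context: $Z(R)$ is the centre of $R$, $R[t]$ the polynomial ring over $R$ in a commuting indeterminate $t$, and $\dim_R$ denotes composition length. *)

(* Defs.v *)
From HB Require Import structures.
From mathcomp Require Import all_boot all_order all_algebra.
Set Implicit Arguments. Unset Strict Implicit. Unset Printing Implicit Defensive.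
Import GRing.Theory.
Local Open Scope ring_scope.

Section ModuleDefs.
Variables (R : nzRingType) (M : lmodType R).

Definition is_Rendo (f : M -> M) : Prop :=
  forall (a : R) (x y : M), f (a *: x + y) = a *: f x + f y.

Definition submodule (N : M -> Prop) : Prop :=
  N 0 /\ forall (a : R) (x y : M), N x -> N y -> N (a *: x + y).

Definition subset_of (A B : M -> Prop) : Prop := forall x, A x -> B x.
Definition same_set (A B : M -> Prop) : Prop := forall x, A x <-> B x.

Definition fin_generated : Prop :=
  exists s : seq M, forall x : M, exists r : seq R,
    size r = size s /\ x = \sum_(i < size s) r`_i *: s`_i.

Definition semisimple_module : Prop :=
  forall N, submodule N -> exists K, submodule K /\
    (forall x, N x -> K x -> x = 0) /\
    (forall x, exists n k, N n /\ K k /\ x = n + k).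

Definition comp_length (N : M -> Prop) (m : nat) : Prop :=
  exists s : nat -> M -> Prop,
    (forall i, submodule (s i)) /\
    same_set (s 0%N) (fun x => x = 0) /\
    same_set (s m) N /\
    (forall i, (i < m)%N ->
       subset_of (s i) (s i.+1) /\ ~ subset_of (s i.+1) (s i) /\
       (forall K, submodule K -> subset_of (s i) K -> subset_of K (s i.+1) ->
          same_set K (s i) \/ same_set K (s i.+1))).

Definition nilpotent_map (f : M -> M) : Prop :=
  exists n : nat, forall x, iter n f x = 0.

End ModuleDefs.

Definition central (R : nzRingType) (c : R) : Prop := forall r : R, c * r = r * c.

Definition cscale_mx (R : nzRingType) (m : nat) (c : R) (A : 'M[{poly R}]_m) :=
  map_mx (fun p => c%:P * p) A.

Definition ZR_subalgebra (R : nzRingType) (m : nat) (S : 'M[{poly R}]_m -> Prop) : Prop :=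
  S 0 /\ S 1%:M /\
  (forall A B, S A -> S B -> S (A + B)) /\
  (forall A B, S A -> S B -> S (A *m B)) /\
  (forall c A, central c -> S A -> S (cscale_mx c A)).

(* Main.v *)
Require Import Defs.
From HB Require Import structures.
From mathcomp Require Import all_boot all_order all_algebra.
From Stdlib Require Import Classical ClassicalEpsilon.
Import GRing.Theory.
Local Open Scope ring_scope.

Section Gen.
Variables (R : nzRingType) (M : lmodType R) (phi : M -> M).
Hypothesis Hphi : is_Rendo phi.

Lemma rendo0 (psi : M -> M) : is_Rendo psi -> psi 0 = 0.
Proof.
move=> H; have := H 1 0 0; rewrite !scale1r addr0 => e.
by apply: (@addrI _ (psi 0)); rewrite addr0 -e.
Qed.
Lemma rendoD (psi : M -> M) : is_Rendo psi -> forall x y, psi (x + y) = psi x + psi y.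
Proof. by move=> H x y; rewrite -[x in LHS]scale1r H scale1r. Qed.
Lemma rendoZ (psi : M -> M) : is_Rendo psi -> forall a x, psi (a *: x) = a *: psi x.
Proof. by move=> H a x; rewrite -[a *: x]addr0 H rendo0 // addr0. Qed.
Lemma rendo_sum (psi : M -> M) : is_Rendo psi -> forall n (F : 'I_n -> M), psi (\sum_i F i) = \sum_i psi (F i).
Proof. move=> H n F; elim/big_rec2: _ => [|i y1 y2 _ <-]; by rewrite ?rendo0 ?rendoD. Qed.
Lemma rendo_iter (psi : M -> M) : is_Rendo psi -> (forall x, psi (phi x) = phi (psi x)) ->
  forall i x, psi (iter i phi x) = iter i phi (psi x).
Proof. move=> H Hc; elim=> [|i IH] x //=; by rewrite Hc IH. Qed.
Lemma iter_rendo i : is_Rendo (iter i phi).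
Proof. elim: i => [|i IH] a x y //=; by rewrite IH Hphi. Qed.

Definition pact (p : {poly R}) (x : M) := \sum_(i < size p) p`_i *: iter i phi x.

Lemma pact_widen n (p : {poly R}) (x : M) : (size p <= n)%N -> pact p x = \sum_(i < n) p`_i *: iter i phi x.
Proof.
move=> Hn; rewrite /pact (big_ord_widen n (fun i => p`_i *: iter i phi x) Hn).
rewrite big_mkcond /=; apply: eq_bigr => i _; case: ifP => // /negbT; rewrite -leqNgt => Hi.
by rewrite nth_default // scale0r.
Qed.

Lemma pactD (p q : {poly R}) (x : M) : pact (p + q) x = pact p x + pact q x.
Proof.
pose n := maxn (size p) (size q).
rewrite (@pact_widen n _ _ (size_polyD _ _)) (@pact_widen n _ _ (leq_maxl _ _)) (@pact_widen n _ _ (leq_maxr _ _)).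
rewrite -big_split /=; apply: eq_bigr => i _; by rewrite coefD scalerDl.
Qed.

Lemma pactC (c : R) (x : M) : pact c%:P x = c *: x.
Proof. by rewrite (@pact_widen 1 _ _ (size_polyC_leq1 c)) big_ord1 /= coefC. Qed.

Lemma pact0 (x : M) : pact 0 x = 0.
Proof. by rewrite /pact size_poly0 big_ord0. Qed.

Lemma pact_mulX (p : {poly R}) (x : M) : pact (p * 'X) x = pact p (phi x).
Proof.
rewrite (@pact_widen (size p).+1); last first.
  by rewrite (leq_trans (size_polyMleq _ _)) // size_polyX addn2.
rewrite big_ord_recl coefMX eqxx scale0r add0r /pact; apply: eq_bigr => i _.
by rewrite coefMX /= add0n -iterSr iterS.
Qed.

Lemma pact_scale (c : R) (p : {poly R}) (x : M) : pact (c%:P * p) x = c *: pact p x.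
Proof.
rewrite (@pact_widen (size p)); last first.
  by rewrite (leq_trans (size_polyMleq _ _)) // -subn1 leq_subLR leq_add2r size_polyC_leq1.
rewrite /pact scaler_sumr; apply: eq_bigr => i _; by rewrite coefCM scalerA.
Qed.

Lemma pact_comm (psi : M -> M) : is_Rendo psi -> (forall x, psi (phi x) = phi (psi x)) ->
  forall p x, psi (pact p x) = pact p (psi x).
Proof.
move=> H Hc p x; rewrite /pact rendo_sum //; apply: eq_bigr => i _.
by rewrite rendoZ // rendo_iter.
Qed.

Lemma pact_phi (p : {poly R}) (x : M) : pact p (phi x) = phi (pact p x).
Proof. by rewrite (@pact_comm phi Hphi). Qed.

Lemma pact_addx (p : {poly R}) (x y : M) : pact p (x + y) = pact p x + pact p y.
Proof. rewrite /pact -big_split /=; apply: eq_bigr => i _; by rewrite rendoD ?scalerDr //; apply: iter_rendo. Qed.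

Lemma pact_x0 (p : {poly R}) : pact p 0 = 0.
Proof. rewrite /pact big1 // => i _; by rewrite rendo0 ?scaler0 //; apply: iter_rendo. Qed.

Lemma pact_sumx (p : {poly R}) n (F : 'I_n -> M) : pact p (\sum_i F i) = \sum_i pact p (F i).
Proof. elim/big_rec2: _ => [|i y1 y2 _ <-]; by rewrite ?pact_x0 ?pact_addx. Qed.

Lemma pact_sump n (F : 'I_n -> {poly R}) (x : M) : pact (\sum_i F i) x = \sum_i pact (F i) x.
Proof. elim/big_rec2: _ => [|i y1 y2 _ <-]; by rewrite ?pact0 ?pactD. Qed.

Lemma pactM (p q : {poly R}) (x : M) : pact (p * q) x = pact p (pact q x).
Proof.
elim/poly_ind: p x => [|p c IH] x; first by rewrite mul0r !pact0.
rewrite mulrDl -mulrA -commr_polyX mulrA pactD pact_mulX IH.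
by rewrite pactD pact_mulX pact_scale pactC pact_phi.
Qed.


Fixpoint Rspan (xs : seq M) : M -> Prop :=
  match xs with
  | [::] => fun x => x = 0
  | y :: ys => fun x => exists a z, Rspan ys z /\ x = a *: y + z
  end.

Fixpoint PRspan (xs : seq M) : M -> Prop :=
  match xs with
  | [::] => fun x => x = 0
  | y :: ys => fun x => exists p z, PRspan ys z /\ x = pact p y + z
  end.

Lemma sub_Rspan xs : submodule (Rspan xs).
Proof.
elim: xs => [|y ys [IH0 IHc]] /=.
  by split=> // a x z -> ->; rewrite scaler0 addr0.
split; first by exists 0, 0; rewrite scale0r addr0.
move=> a x x' [b [z [Hz ->]]] [b' [z' [Hz' ->]]].
exists (a * b + b'), (a *: z + z'); split; first exact: IHc.
by rewrite scalerDr scalerA scalerDl addrACA.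
Qed.

Lemma sub_PRspan xs : submodule (PRspan xs).
Proof.
elim: xs => [|y ys [IH0 IHc]] /=.
  by split=> // a x z -> ->; rewrite scaler0 addr0.
split; first by exists 0, 0; rewrite pact0 addr0.
move=> a x x' [b [z [Hz ->]]] [b' [z' [Hz' ->]]].
exists (a%:P * b + b'), (a *: z + z'); split; first exact: IHc.
by rewrite scalerDr pactD pact_scale addrACA.
Qed.

Lemma subD (N : M -> Prop) : submodule N -> forall x y, N x -> N y -> N (x + y).
Proof. by move=> [_ H] x y Hx Hy; rewrite -[x]scale1r; apply: H. Qed.
Lemma subZ (N : M -> Prop) : submodule N -> forall a x, N x -> N (a *: x).
Proof. by move=> [H0 H] a x Hx; rewrite -[a *: x]addr0; apply: H. Qed.
Lemma subN (N : M -> Prop) : submodule N -> forall x, N x -> N (- x).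
Proof. by move=> HN x Hx; rewrite -scaleN1r; apply: subZ. Qed.
Lemma subB (N : M -> Prop) : submodule N -> forall x y, N x -> N y -> N (x - y).
Proof. by move=> HN x y Hx Hy; apply: subD => //; apply: subN. Qed.

Lemma Rspan_head y ys : Rspan (y :: ys) y.
Proof. exists 1, 0; split; first exact: (sub_Rspan ys).1. by rewrite scale1r addr0. Qed.
Lemma Rspan_tail y ys z : Rspan ys z -> Rspan (y :: ys) z.
Proof. by move=> Hz; exists 0, z; rewrite scale0r add0r. Qed.

Definition step (A B : M -> Prop) :=
  ~ subset_of B A /\ forall L, submodule L -> subset_of A L -> subset_of L B ->
     same_set L A \/ same_set L B.

Fixpoint schain (xs : seq M) : Prop :=
  match xs with
  | [::] => True
  | y :: ys => schain ys /\ step (Rspan ys) (Rspan (y :: ys))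
  end.

Lemma chain_from_comp (N : M -> Prop) m : comp_length N m ->
  exists xs, size xs = m /\ schain xs /\ same_set (Rspan xs) N.
Proof.
move=> [s [Hsub [H0 [Hm Hst]]]].
suff: forall i, (i <= m)%N -> exists xs, size xs = i /\ schain xs /\ same_set (Rspan xs) (s i).
  move=> /(_ m (leqnn m)) [xs [h1 [h2 h3]]]; exists xs; split=> //; split=> // x.
  by rewrite h3 Hm.
elim=> [|i IH] Hi.
  by exists [::]; split=> //; split=> // x; rewrite H0.
have [xs [Hs [Hc He]]] := IH (ltnW Hi).
have [Hsi [Hns Hmax]] := Hst i Hi.
have [x [Hx Hnx]] : exists x, s i.+1 x /\ ~ s i x.
  apply: NNPP => Hn; apply: Hns => x Hx; apply: NNPP => Hnx; apply: Hn; by exists x.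
have HL : same_set (Rspan (x :: xs)) (s i.+1).
  have := Hmax (Rspan (x :: xs)) (sub_Rspan _).
  case.
  - by move=> z /He Hz; apply: Rspan_tail.
  - move=> z [a [w [Hw ->]]]; apply: (Hsub i.+1).2 => //; apply: Hsi; exact/He.
  - by move=> /(_ x) [/(_ (Rspan_head _ _))].
  - done.
exists (x :: xs); split; first by rewrite /= Hs.
split; last exact: HL.
split=> //; split.
  move=> H; apply: Hnx; apply/He; apply: H; exact: Rspan_head.
move=> L HLs HA HB.
have := Hmax L HLs (fun z Hz => HA z ((He z).2 Hz)) (fun z Hz => (HL z).1 (HB z Hz)).
case=> HLe; [left|right] => z; [rewrite HLe He | rewrite HLe HL]; done.
Qed.


Lemma Rspan_mem xs x : x \in xs -> Rspan xs x.
Proof.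
elim: xs => [//|y ys IH]; rewrite inE => /orP [/eqP ->|/IH]; first exact: Rspan_head.
exact: Rspan_tail.
Qed.

Lemma split_chain (T : M -> Prop) : submodule T -> forall xs, schain xs ->
  exists ys zs, schain ys /\ same_set (Rspan ys) (fun x => T x /\ Rspan xs x) /\
    (size ys + size zs = size xs)%N /\ (forall z, z \in zs -> Rspan xs z) /\
    (forall x, Rspan xs x -> exists t w, T t /\ Rspan zs w /\ x = t + w).
Proof.
move=> HT; elim=> [|x xs IH] /=.
  move=> _; exists [::], [::]; split=> //; split.
    by move=> z /=; split=> [->|[]//]; split=> //; exact: HT.1.
  split=> //; split=> // z ->; exists 0, 0; split=> //; first exact: HT.1.
  by rewrite addr0.
move=> [Hc [Hns Hmax]].
have [ys [zs [Hyc [Hye [Hsz [Hzs Hcov]]]]]] := IH Hc.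
have subAB : forall z, Rspan xs z -> Rspan (x :: xs) z by move=> z; apply: Rspan_tail.
case: (classic (exists y, T y /\ Rspan (x :: xs) y /\ ~ Rspan xs y)) => [[y [Ty [By nAy]]]|Hn].
-
  have HL : forall b, Rspan (x :: xs) b -> Rspan (y :: xs) b.
    have := Hmax (Rspan (y :: xs)) (sub_Rspan _) (fun z Hz => Rspan_tail _ _ _ Hz).
    case.
    + move=> z [a [w [Hw ->]]]; exact: ((sub_Rspan (x :: xs)).2 a y w By (subAB w Hw)).
    + by move=> /(_ y) [/(_ (Rspan_head _ _))].
    + by move=> H b /H.
  have Heq : same_set (Rspan (y :: ys)) (fun z => T z /\ Rspan (x :: xs) z).
    move=> z; split.
      move=> [a [w [/Hye [Tw Aw] ->]]]; split; first exact: HT.2.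
      by apply: (sub_Rspan _).2 => //; apply: subAB.
    move=> [Tz /HL [a [w [Aw Ez]]]]; exists a, w; split=> //; apply/Hye; split=> //.
    have -> : w = z - a *: y by rewrite Ez addrC addKr.
    by apply: subB => //; apply: subZ.
  exists (y :: ys), zs; split; [|split; [exact: Heq|split; [|split]]].
  + split=> //; split.
      move=> H; apply: nAy; have /H /Hye [] : Rspan (y :: ys) y by apply: Rspan_head.
      done.
    move=> L HLs HA HB.
    pose L2 := fun z => exists l w, L l /\ Rspan xs w /\ z = l + w.
    have HL2 : submodule L2.
      split; first by exists 0, 0; split; [exact: HLs.1|split; [exact: (sub_Rspan _).1| rewrite addr0]].
      move=> a z z' [l [w [Hl [Hw ->]]]] [l' [w' [Hl' [Hw' ->]]]].
      exists (a *: l + l'), (a *: w + w'); split; first exact: HLs.2.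
      split; first exact: (sub_Rspan _).2.
      by rewrite scalerDr addrACA.
    have := Hmax L2 HL2.
    case.
    + move=> z Hz; exists 0, z; split; [exact: HLs.1|split=> //]; by rewrite add0r.
    + move=> z [l [w [/HB /Heq [_ Bl] [Aw ->]]]]; exact: (@subD _ (sub_Rspan (x :: xs)) _ _ Bl (subAB w Aw)).
    + move=> H2; left=> z; split=> [Lz|]; last exact: HA.
      have /H2 Az : L2 z by exists z, 0; split=> //; split; [exact: (sub_Rspan _).1|rewrite addr0].
      have /Heq [Tz _] := HB z Lz.
      by apply/Hye.
    + move=> H2; right=> z; split=> [|Yz]; first exact: HB.
      have /Heq [Tz Bz] := Yz.
      have [l [w [Hl [Aw Ez]]]] := (H2 z).2 Bz.
      have Tw : T w.
        have -> : w = z - l by rewrite Ez addrC addKr.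
        by apply: subB => //; have /Heq [] := HB l Hl.
      have -> : z = l + w by [].
      apply: subD => //; apply: HA; apply/Hye; split=> //.
  + by rewrite /= addSn Hsz.
  + by move=> z /Hzs; apply: subAB.
  + move=> b /HL [a [w [Aw ->]]].
    have [t [u [Tt [Zu ->]]]] := Hcov w Aw.
    exists (a *: y + t), u; split; [by apply: HT.2|split=> //]; by rewrite addrA.
- have Heq : same_set (Rspan ys) (fun z => T z /\ Rspan (x :: xs) z).
    move=> z; rewrite Hye; split=> [[Tz Az]|[Tz Bz]]; first by split=> //; apply: subAB.
    split=> //; apply: NNPP => nAz; apply: Hn; by exists z.
  exists ys, (x :: zs); split=> //; split=> //; split; first by rewrite /= addnS Hsz.
  split.
    move=> z; rewrite inE => /orP [/eqP ->|/Hzs]; [exact: Rspan_head|exact: subAB].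
  move=> b [a [w [Aw ->]]].
  have [t [u [Tt [Zu ->]]]] := Hcov w Aw.
  exists t, (a *: x + u); split=> //; split; first by exists a, u.
  by rewrite addrCA.
Qed.


Lemma pact_in (N : M -> Prop) : submodule N -> (forall x, N x -> N (phi x)) ->
  forall p g, N g -> N (pact p g).
Proof.
move=> HN Hinv p g Hg; rewrite /pact; elim/big_rec: _ => [|i y _ Hy]; first exact: HN.1.
apply: HN.2 => //; elim: (nat_of_ord i) => [|k IH] //=; exact: Hinv.
Qed.

Lemma PRspan_in (N : M -> Prop) : submodule N -> (forall x, N x -> N (phi x)) ->
  forall gs, (forall g, g \in gs -> N g) -> forall x, PRspan gs x -> N x.
Proof.
move=> HN Hinv; elim=> [|g gs IH] Hgs x /=; first by move->; exact: HN.1.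
move=> [p [z [Hz ->]]]; apply: subD => //.
  by apply: pact_in => //; apply: Hgs; rewrite inE eqxx.
by apply: IH => // h Hh; apply: Hgs; rewrite inE Hh orbT.
Qed.

Lemma Rspan_PR zs x : Rspan zs x -> PRspan zs x.
Proof.
elim: zs x => [|z zs IH] x //= [a [w [Hw ->]]].
by exists a%:P, w; rewrite pactC; split=> //; apply: IH.
Qed.

Lemma PRspan_cat gs zs a b : PRspan gs a -> Rspan zs b -> PRspan (gs ++ zs) (a + b).
Proof.
elim: gs a => [|g gs IH] a /=; first by move=> -> /Rspan_PR; rewrite add0r.
move=> [p [z [Hz ->]]] Hb; exists p, (z + b); split; first exact: IH.
by rewrite addrA.
Qed.

Lemma lift_gens (N : M -> Prop) hs : (forall h, h \in hs -> exists g, N g /\ h = phi g) ->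
  exists gs, size gs = size hs /\ (forall g, g \in gs -> N g) /\
   (forall x, PRspan hs x -> PRspan gs x /\ exists w, PRspan gs w /\ x = phi w).
Proof.
elim: hs => [|h hs IH] Hhs.
  by exists [::]; split=> //; split=> // x /= ->; split=> //; exists 0; split=> //; rewrite rendo0.
have [g [Ng Eh]] := Hhs h (mem_head _ _).
have [gs [Hs [HgN HP]]] := IH (fun h' Hh' => Hhs h' (@mem_behead _ (h :: hs) _ Hh')).
exists (g :: gs); split; first by rewrite /= Hs.
split.
  move=> g'; rewrite inE => /orP [/eqP ->|]; [done|exact: HgN].
move=> x [p [z [Hz ->]]]; have [Pz [w [Pw Ez]]] := HP z Hz.
split.
  by exists (p * 'X), z; rewrite pact_mulX -Eh.
exists (pact p g + w); split; first by exists p, w.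
by rewrite rendoD // Eh pact_phi Ez.
Qed.

Lemma main_gen n : forall N : M -> Prop, submodule N -> (forall x, N x -> N (phi x)) ->
  (forall x, N x -> iter n phi x = 0) ->
  forall xs, schain xs -> same_set (Rspan xs) (fun x => N x /\ phi x = 0) ->
  exists gs, size gs = size xs /\ (forall g, g \in gs -> N g) /\ (forall x, N x -> PRspan gs x).
Proof.
elim: n => [|n IH] N HN Hinv Hnil xs Hxs Hxe.
  exists (nseq (size xs) 0); split; first by rewrite size_nseq.
  split; first by move=> g; rewrite mem_nseq => /andP [_ /eqP ->]; exact: HN.1.
  move=> x /Hnil /= ->; exact: (sub_PRspan _).1.
pose N' := fun y => exists x, N x /\ y = phi x.
have HN' : submodule N'.
  split; first by exists 0; split; [exact: HN.1|rewrite rendo0].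
  move=> a y y' [x [Hx ->]] [x' [Hx' ->]]; exists (a *: x + x'); split; last by rewrite Hphi.
  exact: HN.2.
have Hinv' : forall y, N' y -> N' (phi y).
  by move=> y [x [Hx ->]]; exists (phi x); split=> //; exact: Hinv.
have Hnil' : forall y, N' y -> iter n phi y = 0.
  by move=> y [x [Hx ->]]; rewrite -iterSr; exact: Hnil.
pose T := fun y => N' y /\ phi y = 0.
have HT : submodule T.
  split; first by split; [exact: HN'.1|rewrite rendo0].
  move=> a y y' [Ny Py] [Ny' Py']; split; first exact: HN'.2.
  by rewrite Hphi Py Py' scaler0 addr0.
have [ys [zs [Hyc [Hye [Hsz [Hzs Hcov]]]]]] := @split_chain T HT xs Hxs.
have Hye' : same_set (Rspan ys) (fun y => N' y /\ phi y = 0).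
  move=> y; rewrite Hye; split=> [[]//|[Ny Py]]; split=> //; apply/Hxe; split=> //.
  by case: Ny => x [Hx ->]; exact: Hinv.
have [hs [Hhs [HhN HhP]]] := IH N' HN' Hinv' Hnil' ys Hyc Hye'.
have [gs [Hgs [HgN HgP]]] := @lift_gens N hs (fun h Hh => HhN h Hh).
exists (gs ++ zs); split; first by rewrite size_cat Hgs Hhs Hsz.
split.
  move=> g; rewrite mem_cat => /orP [/HgN //|/Hzs /Hxe []//].
move=> x Nx.
have Nphx : N' (phi x) by exists x.
have [_ [w [Pw Ew]]] := HgP _ (HhP _ Nphx).
have Nw : N w by apply: (@PRspan_in N HN Hinv gs HgN w Pw).
have Kd : Rspan xs (x - w).
  apply/Hxe; split; first by apply: subB.
  by rewrite rendoD // -scaleN1r rendoZ // Ew scaleN1r subrr.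
have [t [u [[Nt _] [Zu Ed]]]] := Hcov _ Kd.
have Pt : PRspan gs t by have [] := HgP t (HhP t Nt).
have -> : x = (w + t) + u by rewrite -addrA -Ed addrC subrK.
apply: PRspan_cat => //; exact: subD (sub_PRspan gs) _ _ Pw Pt.
Qed.


Lemma PRspan_sum gs x : PRspan gs x ->
  exists r : seq {poly R}, size r = size gs /\ x = \sum_(i < size gs) pact r`_i gs`_i.
Proof.
elim: gs x => [|g gs IH] x /=; first by move->; exists [::]; rewrite big_ord0.
move=> [p [z [/IH [r [Hr ->]] ->]]]; exists (p :: r); split; first by rewrite /= Hr.
by rewrite big_ord_recl.
Qed.

Variables (m : nat) (g : 'I_m -> M).

Definition G (v : 'rV[{poly R}]_m) := \sum_i pact (v ord0 i) (g i).

Lemma G_add v w : G (v + w) = G v + G w.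
Proof. rewrite /G -big_split /=; apply: eq_bigr => i _; by rewrite mxE pactD. Qed.
Lemma G_0 : G 0 = 0.
Proof. rewrite /G big1 // => i _; by rewrite mxE pact0. Qed.
Lemma G_sub v w : G (v - w) = G v - G w.
Proof. by apply/eqP; rewrite eq_sym subr_eq -G_add subrK. Qed.
Lemma G_scale c v : G (c%:P *: v) = c *: G v.
Proof. rewrite /G scaler_sumr; apply: eq_bigr => i _; by rewrite mxE pact_scale. Qed.
Lemma G_X v : G ('X *: v) = phi (G v).
Proof.
rewrite /G rendo_sum //; apply: eq_bigr => i _.
by rewrite mxE -commr_polyX pact_mulX pact_phi.
Qed.
Lemma G_mul v (A : 'M[{poly R}]_m) : G (v *m A) = \sum_i pact (v ord0 i) (G (row i A)).
Proof.
rewrite /G.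
under eq_bigr do rewrite mxE pact_sump.
rewrite exchange_big /=; apply: eq_bigr => i _.
rewrite pact_sumx; apply: eq_bigr => j _.
by rewrite mxE pactM.
Qed.

End Gen.
Lemma polyC_central (R : nzRingType) (c : R) : central c -> forall p : {poly R}, p * c%:P = c%:P * p.
Proof. move=> Hc p; apply/polyP => k; by rewrite coefMC coefCM Hc. Qed.

Lemma mul_cscale (R : nzRingType) m (c : R) (v : 'rV[{poly R}]_m) (A : 'M[{poly R}]_m) : central c ->
  v *m cscale_mx c A = c%:P *: (v *m A).
Proof.
move=> Hc; apply/matrixP => i j; rewrite !mxE mulr_sumr; apply: eq_bigr => k _.
by rewrite mxE mulrA polyC_central // -mulrA.
Qed.

Theorem theorem4p4 (R : nzRingType) (M : lmodType R) (phi : M -> M) (m : nat) :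
  fin_generated M -> semisimple_module M ->
  is_Rendo phi -> nilpotent_map phi ->
  comp_length (fun x => phi x = 0) m ->
  exists (S : 'M[{poly R}]_m -> Prop) (f : 'M[{poly R}]_m -> M -> M),
    ZR_subalgebra S /\
    (* f maps S into the centralizer C_phi *)
    (forall A, S A -> is_Rendo (f A) /\ forall x, f A (phi x) = phi (f A x)) /\
    (* f is onto C_phi *)
    (forall psi : M -> M, is_Rendo psi -> (forall x, psi (phi x) = phi (psi x)) ->
       exists A, S A /\ forall x, f A x = psi x) /\
    (* f is a Z(R)-algebra homomorphism from the opposite algebra S^op *)
    (forall x, f 1%:M x = x) /\
    (forall A B, S A -> S B -> forall x, f (A + B) x = f A x + f B x) /\
    (forall A B, S A -> S B -> forall x, f (A *m B) x = f B (f A x)) /\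
    (forall c A, central c -> S A -> forall x, f (cscale_mx c A) x = c *: f A x).
Proof.
move=> _ _ Hphi [n Hn] Hcl.
have [xs [Hxs [Hxc Hxe]]] := @chain_from_comp R M _ m Hcl.
have SUB : submodule (fun _ : M => True) by split.
have XE : same_set (Rspan _ _ xs) (fun x => True /\ phi x = 0).
  by move=> x; rewrite Hxe; split=> [|[]].
have [gs [Hgs [_ Hcov]]] :=
  @main_gen R M phi Hphi n (fun _ => True) SUB (fun _ _ => I) (fun x _ => Hn x) xs Hxc XE.
move: Hxs; rewrite -Hgs => Hm; subst m.
pose g := fun i : 'I_(size gs) => gs`_i.
have Hrep : forall x, exists v : 'rV[{poly R}]_(size gs), x = G _ _ phi _ g v.
  move=> x; have [r [Hr Ex]] := PRspan_sum _ _ phi _ _ (Hcov x I).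
  exists (\row_i r`_i); rewrite Ex /G; apply: eq_bigr => i _; by rewrite mxE.
pose rep := fun x => proj1_sig (constructive_indefinite_description _ (Hrep x)).
have Hr : forall x, x = G _ _ phi _ g (rep x).
  by move=> x; rewrite /rep; case: constructive_indefinite_description.
set GG := G _ _ phi _ g in Hr.
have GS : forall v w, GG (v - w) = GG v - GG w by move=> v w; apply: G_sub.
have GA : forall v w, GG (v + w) = GG v + GG w by move=> v w; apply: G_add.
have G0 : GG 0 = 0 by apply: G_0.
pose S := fun A : 'M[{poly R}]_(size gs) => forall v, GG v = 0 -> GG (v *m A) = 0.
have fS : forall A v x, S A -> GG v = x -> GG (rep x *m A) = GG (v *m A).
  move=> A v x SA Ev; apply/eqP; rewrite -subr_eq0 -GS -mulmxBl; apply/eqP; apply: SA.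
  by rewrite GS -Hr Ev subrr.
have GZ : forall c v, GG (c%:P *: v) = c *: GG v by move=> c v; apply: G_scale.
have GX : forall v, GG ('X *: v) = phi (GG v) by move=> v; apply: G_X.
exists S, (fun A x => GG (rep x *m A)).
split.
  split; first by move=> v _; rewrite mulmx0 G0.
  split; first by move=> v; rewrite mulmx1.
  split; first by move=> A B SA SB v Hv; rewrite mulmxDr GA SA // SB // addr0.
  split; first by move=> A B SA SB v Hv; rewrite mulmxA; apply: SB; apply: SA.
  by move=> c A Hc SA v Hv; rewrite mul_cscale // GZ SA // scaler0.
split.
  move=> A SA; split.
    move=> a x y; rewrite (fS A (a%:P *: rep x + rep y)) //; last by rewrite GA GZ -!Hr.
    by rewrite mulmxDl GA -scalemxAl GZ.
  move=> x; rewrite (fS A ('X *: rep x)) //; last by rewrite GX -Hr.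
  by rewrite -scalemxAl GX.
split.
  move=> psi Hpsi Hc.
  pose A := \matrix_(i, j) (rep (psi (g i))) ord0 j.
  have Hrow : forall i, GG (row i A) = psi (g i).
    move=> i; rewrite (_ : row i A = rep (psi (g i))); first exact: (esym (Hr _)).
    by apply/rowP => j; rewrite !mxE.
  have KA : forall v, GG (v *m A) = psi (GG v).
    move=> v; rewrite /GG G_mul //.
    under eq_bigr do rewrite -/GG Hrow.
    rewrite /G rendo_sum //; apply: eq_bigr => i _.
    by rewrite pact_comm.
  exists A; split; first by move=> v Hv; rewrite KA Hv rendo0.
  by move=> x; rewrite KA -Hr.
split; first by move=> x; rewrite mulmx1 -Hr.
split; first by move=> A B _ _ x; rewrite mulmxDr GA.
split; first by move=> A B SA SB x; rewrite (fS B (rep x *m A)) // mulmxA.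
by move=> c A Hc SA x; rewrite mul_cscale // GZ.
Qed.
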